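(* Let $B$ be a Horn program, $E^+,E^-$ finite sets of ground atoms, and $H_1,H_2,H_3\in\mathcal{H}_{D,C}$ hypotheses with $H_3$ a generalization of $H_1$. If $S_{MDL}(H_2,B,E^+,E^-) - S_{MDL}(H_1,B,E^+,E^-) > fn(H_1,B,E^+) - (size(H_3)-size(H_1))$, then $S_{MDL}(H_2,B,E^+,E^-) > S_{MDL}(H_3,B,E^+,E^-)$.
   Context: A definite clause is a clause with exactly one positive literal. A hypothesis is a finite set of definite clauses; $\mathcal{H}_{D,C}$ denotes the hypothesis space of hypotheses consistent with a declaration bias $D$ and hypothesis constraints $C$ (only membership matters). $size(H)$ is the total number of literals in $H$. $B$ is background knowledge, $E^+$ positive and $E^-$ negative examples. For a hypothesis $H$: $tp(H,B,E^+)=|\{e\in E^+ : H\cup B\models e\}|$, $tn(H,B,E^-)=|\{e\in E^- : H\cup B\not\models e\}|$, $fn(H,B,E^+)=|E^+|-tp(H,B,E^+)$, and $S_{MDL}(H,B,E^+,E^-)=tp(H,B,E^+)+tn(H,B,E^-)-size(H)$. A clause $C_1$ subsumes a clause $C_2$ iff there is a substitution $\theta$ with $C_1\theta\subseteq C_2$. A clausal theory $T_1$ subsumes $T_2$ ($T_1\preceq T_2$) iff every clause of $T_2$ is subsumed by some clause of $T_1$. $T_1$ is a generalization of $T_2$ iff $T_1\preceq T_2$, and a specialization of $T_2$ iff $T_2\preceq T_1$. *)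

(* Defs.v *)
From Stdlib Require Import List ZArith ClassicalEpsilon.
Import ListNotations.
Open Scope Z_scope.

(* Terms: variables and function symbols (constants are 0-ary functions). *)
Inductive term : Type :=
| Var : nat -> term
| Fn : nat -> list term -> term.

Record atom : Type := mkAtom { pred_sym : nat; args : list term }.

(* A definite clause: exactly one positive literal (the head) and
   a list of negative literals (the body atoms). *)
Record clause : Type := mkClause { head : atom; body : list atom }.

(* A hypothesis is a finite set of definite clauses, represented as a
   duplicate-free list (see [is_hypothesis]). *)
Definition hypothesis := list clause.
Definition is_hypothesis (H : hypothesis) : Prop := NoDup H.

Fixpoint ground_term (t : term) : bool :=
  match t with
  | Var _ => false
  | Fn _ ts => forallb ground_term ts
  end.

Definition ground_atom (a : atom) : Prop := forallb ground_term (args a) = true.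

Definition is_example_set (E : list atom) : Prop :=
  NoDup E /\ Forall ground_atom E.

Definition subst := nat -> term.

Fixpoint subst_term (th : subst) (t : term) : term :=
  match t with
  | Var n => th n
  | Fn f ts => Fn f (map (subst_term th) ts)
  end.

Definition subst_atom (th : subst) (a : atom) : atom :=
  mkAtom (pred_sym a) (map (subst_term th) (args a)).

Inductive literal : Type := Pos : atom -> literal | Neg : atom -> literal.

Definition subst_lit (th : subst) (l : literal) : literal :=
  match l with Pos a => Pos (subst_atom th a) | Neg a => Neg (subst_atom th a) end.

Definition literals (c : clause) : list literal := Pos (head c) :: map Neg (body c).

Definition size (H : hypothesis) : Z :=
  Z.of_nat (fold_right (fun c acc => (length (literals c) + acc)%nat) 0%nat H).

Definition subsumes (c1 c2 : clause) : Prop :=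
  exists th : subst, forall l, In l (map (subst_lit th) (literals c1)) -> In l (literals c2).

Definition theory_subsumes (T1 T2 : list clause) : Prop :=
  forall c2, In c2 T2 -> exists c1, In c1 T1 /\ subsumes c1 c2.

Definition generalization (T1 T2 : list clause) : Prop := theory_subsumes T1 T2.
Definition specialization (T1 T2 : list clause) : Prop := theory_subsumes T2 T1.

Section Semantics.
Variables (D : Type) (fI : nat -> list D -> D) (pI : nat -> list D -> Prop).

Fixpoint eval (v : nat -> D) (t : term) : D :=
  match t with
  | Var n => v n
  | Fn f ts => fI f (map (eval v) ts)
  end.

Definition holds (v : nat -> D) (a : atom) : Prop := pI (pred_sym a) (map (eval v) (args a)).

Definition sat_clause (c : clause) : Prop :=
  forall v : nat -> D, (forall b, In b (body c) -> holds v b) -> holds v (head c).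
End Semantics.

(* Logical consequence: P |= a (a a ground atom, so its truth does not
   depend on the assignment). *)
Definition entails (P : list clause) (a : atom) : Prop :=
  forall (D : Type) (fI : nat -> list D -> D) (pI : nat -> list D -> Prop),
    (forall c, In c P -> sat_clause D fI pI c) ->
    forall v : nat -> D, holds D fI pI v a.

Definition entailsb (P : list clause) (a : atom) : bool :=
  if excluded_middle_informative (entails P a) then true else false.

Definition tp (H B : list clause) (Ep : list atom) : Z :=
  Z.of_nat (length (filter (fun e => entailsb (H ++ B) e) Ep)).

Definition tn (H B : list clause) (En : list atom) : Z :=
  Z.of_nat (length (filter (fun e => negb (entailsb (H ++ B) e)) En)).

Definition fn (H B : list clause) (Ep : list atom) : Z :=
  Z.of_nat (length Ep) - tp H B Ep.

Definition S_MDL (H B : list clause) (Ep En : list atom) : Z :=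
  tp H B Ep + tn H B En - size H.

(* Main.v *)
Require Import Defs.
From Stdlib Require Import List ZArith Lia.
Import ListNotations.
Open Scope Z_scope.

Fixpoint eval_subst D fI (v : nat -> D) th (t : term) {struct t} :
  eval D fI v (subst_term th t) = eval D fI (fun n => eval D fI v (th n)) t.
Proof.
  destruct t as [n|f ts]; simpl; [reflexivity|].
  f_equal. rewrite map_map. induction ts as [|t ts IH]; simpl; [reflexivity|].
  f_equal; [apply eval_subst|apply IH].
Qed.

Lemma holds_subst D fI pI v th a :
  holds D fI pI v (subst_atom th a) <-> holds D fI pI (fun n => eval D fI v (th n)) a.
Proof.
  unfold holds, subst_atom; simpl. rewrite map_map.
  rewrite (map_ext _ _ (eval_subst D fI v th)). tauto.
Qed.

Lemma sat_subsumes D fI pI c1 c2 :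
  subsumes c1 c2 -> sat_clause D fI pI c1 -> sat_clause D fI pI c2.
Proof.
  intros [th Hth] Hs v Hb.
  assert (Hh : subst_atom th (Defs.head c1) = Defs.head c2).
  { assert (P : In (Pos (subst_atom th (Defs.head c1))) (map (subst_lit th) (literals c1)))
      by (left; reflexivity).
    specialize (Hth _ P).
    unfold literals in Hth; simpl in Hth.
    destruct Hth as [E|E].
    - injection E; auto.
    - apply in_map_iff in E. destruct E as [x [Hx _]]; discriminate. }
  rewrite <- Hh. apply holds_subst. apply Hs.
  intros b Hbin. apply holds_subst. apply Hb.
  assert (P : In (Neg (subst_atom th b)) (map (subst_lit th) (literals c1))).
  { right. rewrite map_map. apply in_map_iff. exists b. split; [reflexivity|auto]. }
  specialize (Hth _ P).
  unfold literals in Hth; simpl in Hth.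
  destruct Hth as [E|E].
  - discriminate.
  - apply in_map_iff in E. destruct E as [x [Hx Hin]]. injection Hx; intros ->; auto.
Qed.

Lemma entails_gen H1 H3 B a :
  generalization H3 H1 -> entails (H1 ++ B) a -> entails (H3 ++ B) a.
Proof.
  intros G E D fI pI Hs v. apply E. intros c Hc.
  apply in_app_or in Hc. destruct Hc as [Hc|Hc].
  - destruct (G c Hc) as [c3 [Hc3 Hsub]].
    apply (sat_subsumes D fI pI c3); auto. apply Hs, in_or_app; auto.
  - apply Hs, in_or_app; auto.
Qed.

Lemma filter_mono {A} (f g : A -> bool) l :
  (forall x, f x = true -> g x = true) ->
  (length (filter f l) <= length (filter g l))%nat.
Proof.
  intros Hfg. induction l as [|x l IH]; simpl; [lia|].
  destruct (f x) eqn:Ef.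
  - rewrite (Hfg x Ef); simpl; lia.
  - destruct (g x); simpl; lia.
Qed.

Lemma filter_le {A} (f : A -> bool) l : (length (filter f l) <= length l)%nat.
Proof. induction l; simpl; [lia|]. destruct (f a); simpl; lia. Qed.

Theorem proposition4p10 (HS : hypothesis -> Prop) (B : list clause)
  (Ep En : list atom) (H1 H2 H3 : hypothesis) :
  is_example_set Ep -> is_example_set En ->
  is_hypothesis H1 -> is_hypothesis H2 -> is_hypothesis H3 ->
  HS H1 -> HS H2 -> HS H3 ->
  generalization H3 H1 ->
  S_MDL H2 B Ep En - S_MDL H1 B Ep En > fn H1 B Ep - (size H3 - size H1) ->
  S_MDL H2 B Ep En > S_MDL H3 B Ep En.
Proof.
  intros _ _ _ _ _ _ _ _ G Hlt.
  assert (Htn : tn H3 B En <= tn H1 B En).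
  { unfold tn. apply Nat2Z.inj_le. apply filter_mono.
    intros x. unfold entailsb.
    destruct (ClassicalEpsilon.excluded_middle_informative (entails (H3 ++ B) x)) as [e3|n3];
    destruct (ClassicalEpsilon.excluded_middle_informative (entails (H1 ++ B) x)) as [e1|n1];
    simpl; auto.
    exfalso. apply n3. eapply entails_gen; eauto. }
  assert (Htp : tp H3 B Ep <= Z.of_nat (length Ep)).
  { unfold tp. apply Nat2Z.inj_le. apply filter_le. }
  unfold S_MDL, fn in *. lia.
Qed.
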